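(* Let $\mathcal G=(\mathcal V,\mathcal E,W)$ be a network, $h\in\mathbb{R}^{\mathcal V}$, and consider the SNC game with binary actions on $\mathcal G$ with external field $h$. If $\mathcal G$ is structurally balanced, then the set $\mathcal N$ of Nash equilibria is globally BR-reachable.
   Context: A network is a triple $\mathcal G=(\mathcal V,\mathcal E,W)$ where $\mathcal V$ is a finite nonempty set, $\mathcal E\subseteq\mathcal V\times\mathcal V$, and $W\in\mathbb{R}^{\mathcal V\times\mathcal V}$ has zero diagonal and satisfies $W_{ij}\neq0$ iff $(i,j)\in\mathcal E$ (weights may have either sign). It is structurally balanced if $\mathcal V$ can be written as a disjoint union $\mathcal V_1\cup\mathcal V_2$ with $W_{ij}\ge0$ whenever $i,j$ lie in the same part and $W_{ij}\le0$ whenever they lie in different parts. The SNC game with binary actions on $\mathcal G$ with external field $h\in\mathbb{R}^{\mathcal V}$ has player set $\mathcal V$, action set $\{-1,+1\}$ for each player, strategy profiles $\mathcal X=\{\pm1\}^{\mathcal V}$, and utilities $u_i(x)=h_ix_i+x_i\sum_{j\in\mathcal V}W_{ij}x_j$. Best responses $\mathcal B_i(x_{-i})=\arg\max_{x_i\in\{\pm1\}}u_i(x_i,x_{-i})$; Nash equilibrium: $x^*_i\in\mathcal B_i(x^*_{-i})$ for all $i$. A BR-path of length $l\ge0$ from $x$ to $y$ is a sequence $x^{(0)}=x,\dots,x^{(l)}=y$ such that for each $k$ some player $i_k$ has $x^{(k)}_{-i_k}=x^{(k-1)}_{-i_k}$ and $x^{(k)}_{i_k}\in\mathcal B_{i_k}(x^{(k-1)}_{-i_k})\setminus\{x^{(k-1)}_{i_k}\}$.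 A set $\mathcal X^*\subseteq\mathcal X$ is globally BR-reachable if from every profile there is a BR-path to some element of $\mathcal X^*$. *)

(* Defs.v *)
From mathcomp Require Import all_boot all_order all_algebra.
Set Implicit Arguments. Unset Strict Implicit. Unset Printing Implicit Defensive.
Import Order.TTheory GRing.Theory Num.Theory.
Local Open Scope ring_scope.

(* A network on the finite nonempty player set V with real weights W.
   The edge set is E = {(i,j) | W i j != 0}, so it is determined by W. *)
Definition zero_diag (R : realFieldType) (V : finType) (W : V -> V -> R) : Prop :=
  forall i, W i i = 0.

(* Structural balance: V = V1 \cup V2 disjoint (encoded by V1 and its complement),
   W >= 0 within parts, W <= 0 across parts. *)
Definition structurally_balanced (R : realFieldType) (V : finType)
    (W : V -> V -> R) : Prop :=
  exists V1 : {set V},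
    forall i j, if (i \in V1) == (j \in V1) then 0 <= W i j else W i j <= 0.

Definition act (R : realFieldType) (b : bool) : R := if b then 1 else -1.

Definition profile (V : finType) := V -> bool.

Definition upd (V : finType) (x : profile V) (i : V) (b : bool) : profile V :=
  fun j => if j == i then b else x j.

Definition utility (R : realFieldType) (V : finType) (W : V -> V -> R) (h : V -> R)
    (i : V) (x : profile V) : R :=
  h i * act R (x i) + act R (x i) * \sum_(j : V) W i j * act R (x j).

Definition best_response (R : realFieldType) (V : finType) (W : V -> V -> R)
    (h : V -> R) (i : V) (x : profile V) (b : bool) : Prop :=
  forall b' : bool, utility W h i (upd x i b') <= utility W h i (upd x i b).

Definition nash (R : realFieldType) (V : finType) (W : V -> V -> R) (h : V -> R)
    (x : profile V) : Prop :=
  forall i, best_response W h i x (x i).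

Definition br_step (R : realFieldType) (V : finType) (W : V -> V -> R) (h : V -> R)
    (x y : profile V) : Prop :=
  exists i : V, (forall j, j != i -> y j = x j) /\
    best_response W h i x (y i) /\ y i <> x i.

(* BR-path x^(0) = x, ..., x^(l) = y given as the list [x^(1); ...; x^(l)]. *)
Fixpoint br_path (R : realFieldType) (V : finType) (W : V -> V -> R) (h : V -> R)
    (x : profile V) (s : list (profile V)) : Prop :=
  match s with
  | nil => True
  | cons z s' => br_step W h x z /\ br_path W h z s'
  end.

Definition globally_BR_reachable (R : realFieldType) (V : finType)
    (W : V -> V -> R) (h : V -> R) (X : profile V -> Prop) : Prop :=
  forall x : profile V, exists s : list (profile V),
    br_path W h x s /\ X (last x s).

(* Main.v *)
Require Import Defs.
From mathcomp Require Import all_boot all_order all_algebra.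
From mathcomp Require Import ring lra.
Set Implicit Arguments. Unset Strict Implicit. Unset Printing Implicit Defensive.
Import Order.TTheory GRing.Theory Num.Theory.
Local Open Scope ring_scope.

Section Proof3.
Variables (R : realFieldType) (V : finType) (W : V -> V -> R) (h : V -> R).
Variable (V1 : {set V}).
Hypothesis zd : zero_diag W.
Hypothesis bal : forall i j, if (i \in V1) == (j \in V1) then 0 <= W i j else W i j <= 0.

Definition sg (i : V) : bool := i \in V1.
Definition up (x : profile V) i : bool := x i == sg i.
Definition g (x : profile V) i : R := h i + \sum_j W i j * act R (x j).
Definition phi x i := act R (sg i) * g x i.

Lemma sum_upd x k b i :
  \sum_j W i j * act R (upd x k b j) =
  \sum_j W i j * act R (x j) + W i k * (act R b - act R (x k)).
Proof.
rewrite (bigD1 k) //= [in RHS](bigD1 k) //= /upd eqxx.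
rewrite (eq_bigr (fun j => W i j * act R (x j))); last first.
  by move=> j /negbTE ->.
rewrite mulrBr; set S := \sum_(j | _) _; lra.
Qed.

Lemma g_upd_self x i b : g (upd x i b) i = g x i.
Proof. by rewrite /g sum_upd zd mul0r addr0. Qed.

Lemma util_eq x i b : utility W h i (upd x i b) = act R b * g x i.
Proof.
rewrite /utility -(g_upd_self x i b) /g /upd eqxx; lra.
Qed.

Lemma act_sq b : act R b * act R b = 1.
Proof. by case: b => /=; lra. Qed.

Lemma act_neg b : act R (~~ b) = - act R b.
Proof. by case: b => /=; lra. Qed.

Lemma BR_iff x i b : best_response W h i x b <-> 0 <= act R (b == sg i) * phi x i.
Proof.
have -> : act R (b == sg i) * phi x i = act R b * g x i.
  rewrite /phi mulrA; case: b; case: (sg i) => /=; lra.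
split.
- move=> H; have := H (~~ b); rewrite !util_eq act_neg; lra.
- move=> H b'; rewrite !util_eq; case: (b' =P b) => [->|/eqP nb]; first lra.
  have -> : b' = ~~ b by case: b b' nb {H} => [] [].
  rewrite act_neg; lra.
Qed.

Lemma bal_prod i k : 0 <= act R (sg i) * act R (sg k) * W i k.
Proof.
have := bal i k; rewrite /sg; case: (i \in V1); case: (k \in V1) => /= H; lra.
Qed.

Lemma phi_upd x k b i :
  phi (upd x k b) i = phi x i + act R (sg i) * W i k * (act R b - act R (x k)).
Proof. by rewrite /phi /g sum_upd; lra. Qed.

Lemma phi_down x k i : up x k -> phi (upd x k (~~ x k)) i <= phi x i.
Proof.
rewrite /up => /eqP E; rewrite phi_upd E act_neg.
have := bal_prod i k; lra.
Qed.

Lemma phi_up x k i : ~~ up x k -> phi x i <= phi (upd x k (~~ x k)) i.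
Proof.
rewrite /up => /negbTE E; rewrite phi_upd.
have -> : x k = ~~ sg k by case: (x k) (sg k) E => [] [].
rewrite negbK act_neg; have := bal_prod i k; lra.
Qed.

Lemma br_path_cat x s1 s2 :
  br_path W h x s1 -> br_path W h (last x s1) s2 -> br_path W h x (s1 ++ s2).
Proof. by elim: s1 x => [|z s IH] x //= [H1 H2] H3; split => //; apply: IH. Qed.

Definition Pinv x := forall i, up x i -> 0 <= phi x i.

Definition Aset x := [set i | up x i].

Lemma flip_step x i :
  best_response W h i x (~~ x i) -> br_step W h x (upd x i (~~ x i)).
Proof.
move=> H; exists i; split.
  by move=> j /negbTE; rewrite /upd => ->.
rewrite /upd eqxx; split => //; by case: (x i).
Qed.

Lemma phase1 n x : (#|Aset x| <= n)%N ->
  exists s, br_path W h x s /\ Pinv (last x s).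
Proof.
elim: n x => [|n IH] x Hn.
  exists nil; split => // i Hi; move: Hn; rewrite leqn0 => /eqP/cards0_eq E.
  have : i \in Aset x by rewrite inE.
  by rewrite E inE.
case: (pickP (fun i => up x i && (phi x i < 0))) => [i /andP [Ui Pi]|N]; last first.
  exists nil; split => // i Hi; have := N i; rewrite Hi /= => /negbT.
  by rewrite -leNgt.
set y := upd x i (~~ x i).
have st : br_step W h x y.
  apply: flip_step; apply/BR_iff.
  move: Ui; rewrite /up => /eqP ->;
  have -> : (~~ sg i == sg i) = false by case: (sg i).
  simpl; lra.
have lt : (#|Aset y| < #|Aset x|)%N.
  apply: proper_card; apply/properP; split.
    apply/subsetP => j; rewrite !inE /up /y /upd.
    by case: (j =P i) => [->|].
  exists i; first by rewrite inE.
  rewrite inE /up /y /upd eqxx; move: Ui; rewrite /up.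
  by case: (x i) (sg i) => [] [].
have [s [Hs Ps]] := IH y (leq_trans lt Hn : (_ <= n)%N).
by exists (y :: s); split.
Qed.

Lemma phase2 n x : Pinv x -> (#|~: Aset x| <= n)%N ->
  exists s, br_path W h x s /\ nash W h (last x s).
Proof.
elim: n x => [|n IH] x Px Hn.
  exists nil; split => // i; apply/BR_iff.
  have Ui : up x i.
    move: Hn; rewrite leqn0 => /eqP/cards0_eq E.
    apply/negPn/negP => Ni; have : i \in ~: Aset x by rewrite !inE.
    by rewrite E inE.
  have := Px i Ui; move: Ui; rewrite /up => -> /=; lra.
case: (pickP (fun i => ~~ up x i && (0 < phi x i))) => [i /andP [Ui Pi]|N]; last first.
  exists nil; split => // i; apply/BR_iff => /=.
  case Ui: (up x i); first by have := Px i Ui; move: Ui; rewrite /up => -> /=; lra.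
  have := N i; rewrite Ui /= => /negbT; rewrite -leNgt.
  move: Ui; rewrite /up => -> /=; lra.
set y := upd x i (~~ x i).
have Ex : x i = ~~ sg i by move: Ui; rewrite /up; case: (x i) (sg i) => [] [].
have st : br_step W h x y.
  apply: flip_step; apply/BR_iff.
  rewrite Ex negbK eqxx /=; lra.
have Py : Pinv y.
  move=> j Uj; have := phi_up j Ui; rewrite -/y.
  case: (j =P i) => [->|/eqP nj]; first lra.
  have : up x j by move: Uj; rewrite /up /y /upd (negbTE nj).
  move/Px; lra.
have lt : (#|~: Aset y| < #|~: Aset x|)%N.
  apply: proper_card; apply/properP; split.
    apply/subsetP => j; rewrite !inE /up /y /upd.
    by case: (j =P i) => [->|].
  exists i; first by rewrite !inE.
  by rewrite !inE negbK /up /y /upd eqxx Ex negbK.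
have [s [Hs Ps]] := IH y Py (leq_trans lt Hn : (_ <= n)%N).
by exists (y :: s); split.
Qed.

End Proof3.

Theorem proposition3 (R : realFieldType) (V : finType) (v0 : V)
    (W : V -> V -> R) (h : V -> R) :
  zero_diag W -> structurally_balanced W ->
  globally_BR_reachable W h (nash W h).
Proof.
move=> zd [V1 bal] x.
have [s1 [H1 P1]] := @phase1 R V W h V1 zd _ x (leqnn _).
have [s2 [H2 P2]] := phase2 zd bal P1 (leqnn _).
exists (s1 ++ s2); split; first exact: br_path_cat.
by rewrite last_cat.
Qed.
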